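(* If $A$ is a polyomino with $n$ tiles and $h$ holes, then $p_o(A)\ge 2\lceil 2\sqrt{n+h}\,\rceil$.
   Context: A polyomino is a finite union of closed unit squares (tiles) of the square lattice, any two meeting (if at all) in a whole edge, whose interior is connected. Its holes are the bounded connected components of its complement in the plane. The outer perimeter of $A$ is the set of unit edges on the topological boundary of $A$ that do not bound a hole; $p_o(A)$ is its number of edges. *)

(* Defs.v *)
From HB Require Import structures.
From mathcomp Require Import all_boot all_order all_algebra finmap.
From mathcomp Require Import boolp reals.
Set Implicit Arguments. Unset Strict Implicit. Unset Printing Implicit Defensive.
Import Order.TTheory GRing.Theory Num.Theory.
Local Open Scope fset_scope.

(* A cell (x, y) : int * int denotes the closed unit square [x,x+1] x [y,y+1]. *)
Definition cell := (int * int)%type.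

Definition nbr (c : cell) (d : 'I_4) : cell :=
  match val d with
  | 0 => (c.1 + 1, c.2)%R
  | 1 => (c.1 - 1, c.2)%R
  | 2 => (c.1, c.2 + 1)%R
  | _ => (c.1, c.2 - 1)%R
  end.

Inductive conn (P : cell -> Prop) (a : cell) : cell -> Prop :=
  | conn_refl : P a -> conn P a a
  | conn_step b d : conn P a b -> P (nbr b d) -> conn P a (nbr b d).

(* A polyomino: a finite nonempty set of lattice tiles whose union has
   connected interior, i.e. the tiles are edge-connected. *)
Definition polyomino (A : {fset cell}) : Prop :=
  A != fset0 /\ forall a b, a \in A -> b \in A -> conn (fun c => c \in A) a b.

(* Empty (non-tile) cells.  Connected components of the complement of the
   union of tiles correspond to edge-connected components of empty cells. *)
Definition empty_cell (A : {fset cell}) (c : cell) : Prop := c \notin A.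

Definition bounded_comp (A : {fset cell}) (c : cell) : Prop :=
  exists R : nat, forall b, conn (empty_cell A) c b ->
    (`|b.1|%N + `|b.2|%N <= R)%N.

Definition outer_edge (A : {fset cell}) (c : cell) (d : 'I_4) : Prop :=
  c \in A /\ nbr c d \notin A /\ ~ bounded_comp A (nbr c d).

Definition outer_perimeter (A : {fset cell}) : nat :=
  \sum_(c <- A) #|[set d : 'I_4 | `[< outer_edge A c d >] ]|.

(* A has exactly h holes: there is a set of h cells, one in each bounded
   component of the complement (a system of distinct representatives). *)
Definition num_holes (A : {fset cell}) (h : nat) : Prop :=
  exists H : {fset cell},
    #|` H| = h /\
    (forall c, c \in H -> c \notin A /\ bounded_comp A c) /\
    (forall c c', c \in H -> c' \in H -> conn (empty_cell A) c c' -> c = c') /\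
    (forall c, c \notin A -> bounded_comp A c ->
       exists2 c', c' \in H & conn (empty_cell A) c c').

(* Main.v *)
Require Import Defs.
From HB Require Import structures.
From mathcomp Require Import all_boot all_order all_algebra finmap.
From mathcomp Require Import boolp reals.
From mathcomp Require Import zify ring lra.
Import Order.TTheory GRing.Theory Num.Theory.
Local Open Scope fset_scope.

Lemma real_part (R : realType) (N a b : nat) : (N <= a*b)%N ->
  (2 * Num.ceil (2 * Num.sqrt (N%:R : R)) <= 2 * (a+b)%:Z)%R.
Proof.
move=> hN.
rewrite ler_pM2l // ceil_le_int.
have hs := sqrtr_ge0 (N%:R : R).
have hs2 : (Num.sqrt (N%:R : R) ^+ 2 = N%:R)%R by rewrite sqr_sqrtr // ler0n.
have hab : (N%:R <= a%:R * b%:R :> R)%R by rewrite -natrM ler_nat.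
have ha : (0 <= a%:R :> R)%R by rewrite ler0n.
have hb : (0 <= b%:R :> R)%R by rewrite ler0n.
rewrite -[X in (_ <= X)%R]/(((a + b)%N)%:R)%R natrD.
move: hs2; rewrite expr2 => hs2.
set s := Num.sqrt _ in hs hs2 *.
have hsq : (0 <= (a%:R - b%:R) * (a%:R - b%:R) :> R)%R by rewrite -expr2 sqr_ge0.
have h4 : (4 * (s * s) <= (a%:R + b%:R) * (a%:R + b%:R) :> R)%R by nra.
nra.
Qed.

Definition stp (d : 'I_4) (b : cell) : cell := nbr b d.
Definition norm1 (b : cell) : nat := (`|b.1| + `|b.2|)%N.

Lemma iter_stp (d : 'I_4) j (b : cell) :
  iter j (stp d) b =
  match val d with
  | 0 => (b.1 + j%:Z, b.2)%R
  | 1 => (b.1 - j%:Z, b.2)%R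
  | 2 => (b.1, b.2 + j%:Z)%R
  | _ => (b.1, b.2 - j%:Z)%R
  end.
Proof.
case: d => [[|[|[|[|k]]]] hk] //=; elim: j => [|j IH].
all: rewrite /= ?addr0 ?subr0; try by case: b.
all: rewrite IH /stp /nbr /= -addn1 PoszD.
all: by rewrite ?opprD addrA.
Qed.

Lemma growth d j b : (j <= norm1 (iter j (stp d) b) + norm1 b)%N.
Proof.
rewrite iter_stp /norm1; case: d => [[|[|[|[|k]]]] hk] //=; lia.
Qed.

Lemma conn_iter (A : {fset cell}) d b j :
  (forall i, iter i (stp d) b \notin A) ->
  conn (empty_cell A) b (iter j (stp d) b).
Proof.
move=> H; elim: j => [|j IH]; first by apply: conn_refl; exact: (H 0%N).
rewrite iterS /stp; apply: conn_step => //; exact: (H j.+1).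
Qed.

Lemma ray (A : {fset cell}) d b :
  (forall i, iter i (stp d) b \notin A) -> ~ bounded_comp A b.
Proof.
move=> H [R HR].
have := HR _ (@conn_iter A d b (R + norm1 b).+1 H).
have := growth d (R + norm1 b).+1 b.
rewrite /norm1; lia.
Qed.

Lemma le_sum_seq (s : seq cell) x : x \in s -> (norm1 x <= \sum_(a <- s) norm1 a)%N.
Proof.
elim: s => // y s IH; rewrite in_cons big_cons => /orP [/eqP->|/IH]; first exact: leq_addr. by move=> h; apply: leq_trans h (leq_addl _ _).
Qed.

Lemma extreme (A : {fset cell}) d c : c \in A ->
  exists k, iter k (stp d) c \in A /\
    forall j, iter j (stp d) (nbr (iter k (stp d) c) d) \notin A.
Proof.
move=> cA.
have exP : exists k, iter k (stp d) c \in A by exists 0%N.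
have ubP : forall k, iter k (stp d) c \in A -> (k <= \sum_(a <- A) norm1 a + norm1 c)%N.
  move=> k /le_sum_seq h; apply: leq_trans (growth d k c) _; rewrite leq_add2r; exact: h.
case: (ex_maxnP exP ubP) => k Pk maxk.
exists k; split => // j; apply/negP => hj.
have := maxk (j + k.+1)%N; rewrite iterD iterS.
by move=> /(_ hj); lia.
Qed.

Lemma row_edge (A : {fset cell}) d c : c \in A ->
  exists c', c' \in A /\ outer_edge A c' d /\
    (if (val d < 2)%N then c'.2 = c.2 else c'.1 = c.1).
Proof.
move=> cA; case: (@extreme A d c cA) => k [kA H].
exists (iter k (stp d) c); split => //; split.
  split => //; split; first exact: (H 0%N).
  exact: (@ray _ _ _ H).
rewrite iter_stp; by case: d {H kA} => [[|[|[|[|m]]]] hm].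
Qed.

Lemma hole_in (A : {fset cell}) c : bounded_comp A c ->
  c.1 \in [seq x.1 | x <- A] /\ c.2 \in [seq x.2 | x <- A].
Proof.
move=> hb; split; apply/negPn/negP => hn; move: hb.
- apply: (@ray A (Ordinal (isT : (2 < 4)%N))) => i; rewrite iter_stp /=.
  apply/negP => hi; move/negP: hn; apply; exact: (map_f (fun x : cell => x.1) hi).
- apply: (@ray A (Ordinal (isT : (0 < 4)%N))) => i; rewrite iter_stp /=.
  apply/negP => hi; move/negP: hn; apply; exact: (map_f (fun x : cell => x.2) hi).
Qed.

Lemma sum_count (T : eqType) (s : seq T) (b : pred T) :
  \sum_(c <- s) (b c : nat) = count b s.
Proof. by elim: s => [|x s IH]; rewrite ?big_nil ?big_cons ?IH. Qed.

Lemma card_I4 (p : pred 'I_4) : #|[set d | p d]| =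
  (p (Ordinal (isT : (0 < 4)%N)) + p (Ordinal (isT : (1 < 4)%N)) +
   p (Ordinal (isT : (2 < 4)%N)) + p (Ordinal (isT : (3 < 4)%N)))%N.
Proof.
rewrite -sum1dep_card big_mkcond /= !big_ord_recl big_ord0 /=.
have E : forall i : 'I_4, (if p i then 1 else 0)%N = p i by move=> i; case: (p i).
rewrite !E addn0 !addnA.
by congr (_ + _ + _ + _)%N; congr (p _); apply: val_inj.
Qed.

Lemma count_lb (A : {fset cell}) (d : 'I_4) (f : cell -> int) :
  (forall c c' : cell, (if (val d < 2)%N then c'.2 = c.2 else c'.1 = c.1) -> f c' = f c) ->
  (size (undup [seq f x | x <- A]) <= count (fun c => `[< outer_edge A c d >]) A)%N.
Proof.
move=> hf; rewrite -size_filter -(size_map f).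
apply: uniq_leq_size; first exact: undup_uniq.
move=> y; rewrite mem_undup => /mapP [c cA ->].
case: (@row_edge A d c cA) => c' [c'A [oe hc]].
rewrite -(hf _ _ hc); apply: map_f; rewrite mem_filter c'A andbT.
exact/asboolP.
Qed.

Lemma perim_lb (A : {fset cell}) :
  (2 * size (undup [seq x.1 | x <- A]) + 2 * size (undup [seq x.2 | x <- A])
    <= outer_perimeter A)%N.
Proof.
rewrite /outer_perimeter.
under eq_bigr => c _ do rewrite card_I4.
rewrite !big_split /= !sum_count.
have h0 := @count_lb A (Ordinal (isT : (0 < 4)%N)) snd (fun c c' h => h).
have h1 := @count_lb A (Ordinal (isT : (1 < 4)%N)) snd (fun c c' h => h).
have h2 := @count_lb A (Ordinal (isT : (2 < 4)%N)) fst (fun c c' h => h).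
have h3 := @count_lb A (Ordinal (isT : (3 < 4)%N)) fst (fun c c' h => h).
move: h0 h1 h2 h3; set a := size _; set b := size _.
set u0 := count _ _; set u1 := count _ _; set u2 := count _ _; set u3 := count _ _.
lia.
Qed.

Lemma area (A : {fset cell}) (h : nat) : num_holes A h ->
  (#|` A| + h <= size (undup [seq x.1 | x <- A]) * size (undup [seq x.2 | x <- A]))%N.
Proof.
case=> H [<- [hH [_ _]]].
have -> : (#|` A| + #|` H| = size (enum_fset A ++ enum_fset H))%N by rewrite size_cat.
rewrite -(size_allpairs (@pair int int)); apply: uniq_leq_size.
  rewrite cat_uniq !fset_uniq /= andbT; apply/hasPn => c /hH [cA _]; exact: cA.
move=> c; rewrite mem_cat => /orP [cA|cH].
  case: c cA => x y cA; apply: allpairs_f; rewrite mem_undup.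
    exact: (map_f (fun x : cell => x.1) cA).
  exact: (map_f (fun x : cell => x.2) cA).
case: (hH c cH) => _ /hole_in [h1 h2].
case: c h1 h2 {cH} => x y h1 h2; apply: allpairs_f; by rewrite mem_undup.
Qed.

Theorem lemma1 (R : realType) (A : {fset cell}) (n h : nat) :
  polyomino A -> #|` A| = n -> num_holes A h ->
  (2 * Num.ceil (2 * Num.sqrt ((n + h)%:R : R)) <= (outer_perimeter A)%:Z)%R.
Proof.
move=> _ hn hh.
have ha := @area A h hh; rewrite hn in ha.
apply: le_trans (@real_part R _ _ _ ha) _.
have := perim_lb A; rewrite -lez_nat => H.
apply: le_trans H; rewrite -mulnDr PoszM.
by [].
Qed.
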